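(* In the setting of the context, fix $i,j\in\{1,\dots,n-1\}$, $i\ne j$. Regard the conditional expectation $$\mathbb E_{\mathbb P}[\bar d_j\mid\bar d_i\in\mathcal W_{\delta_i}]=d-\sqrt{\frac{2}{\pi}}\,\frac{\rho_{ji}\,\sigma_j\,e^{-\frac{(d_i^*-d)^2}{2\sigma_i^2}}}{1+\mathrm{erf}\!\left(\frac{d_i^*-d}{\sqrt2\,\sigma_i}\right)}$$ as a function of the diffusion coefficient $g>0$ (all other parameters fixed). Then it is monotonically increasing in $g$ if $\rho_{ji}<0$ and monotonically decreasing in $g$ if $\rho_{ji}>0$. Moreover, for the ambiguity set $\mathcal M_g=\{g>0: (1-\epsilon)g_0^2\le g^2\le(1+\epsilon)g_0^2\}$, the distributionally robust cascading risk $$\mathcal R^{ji}:=\frac{d}{\inf_{\mathcal M_g}\mathbb E_{\mathbb P}[\bar d_j\mid\bar d_i\in\mathcal W_{\delta_i}]}-1$$ equals $\frac{d}{h(-\epsilon)}-1$ if $\rho_{ji}<0$, $\frac{d}{h(\epsilon)}-1$ if $\rho_{ji}>0$, and $0$ if $\rho_{ji}=0$, where $$h(\epsilon)=d-\sqrt{\frac{2}{\pi}}\,\frac{\rho_{ji}\,\sigma_{j,0}\sqrt{1+\epsilon}\;e^{-\frac{(d_i^*-d)^2}{2\sigma_{i,0}^2(1+\epsilon)}}}{1+\mathrm{erf}\!\left(\frac{d_i^*-d}{\sqrt{2(1+\epsilon)}\,\sigma_{i,0}}\right)}.$$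
   Context: Platoon of $n\ge 3$ vehicles with positions $\mathrm{x}_t\in\mathbb R^n$ and velocities $\mathrm{v}_t\in\mathbb R^n$ obeying $d\mathrm{x}_t=\mathrm{v}_t\,dt$, $d\mathrm{v}_t=-L\mathrm{v}_{t-\tau}dt-\beta L(\mathrm{x}_{t-\tau}-\mathrm{y})dt+g\,d\boldsymbol\xi_t$, where $L$ is the Laplacian of a connected undirected positively weighted graph with eigenvalues $0=\lambda_1<\lambda_2\le\dots\le\lambda_n$ and orthonormal eigenvectors $q_1=\frac1{\sqrt n}\mathbf 1_n,\dots,q_n$; $\mathrm{y}=[d,2d,\dots,nd]^T$, $d>0$; $\beta>0$; delay $\tau>0$; diffusion coefficient $g>0$; $\boldsymbol\xi_t$ a standard $n$-dimensional Wiener process. Stability $(\lambda_k\tau,\beta\tau)\in S$ for $k=2,\dots,n$ is assumed, with $S=\{(s_1,s_2): s_1\in(0,\pi/2),\ s_2\in(0,a/\tan a),\ a\in(0,\pi/2)\text{ solving }a\sin a=s_1\}$. The steady-state inter-vehicle distances $\bar d_k=\lim(x^{(k+1)}_t-x^{(k)}_t)$ form $\bar{\boldsymbol d}\sim\mathcal N(d\mathbf 1_{n-1},\Sigma)$ (standing known fact) with $\sigma_{kl}=g^2\frac{\tau^3}{2\pi}\sum_{m=1}^n(\tilde e_k^Tq_m)(\tilde e_l^Tq_m)f(\lambda_m\tau,\beta\tau)$, $\tilde e_k=e_{k+1}-e_k$, $f(s_1,s_2)=\int_{\mathbb R}\frac{dr}{(s_1s_2-r^2\cos r)^2+r^2(s_1-r\sin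 r)^2}$. Write $\sigma_k^2=\sigma_{kk}$ and $\rho_{ji}=\sigma_{ji}/(\sigma_i\sigma_j)$ (independent of $g$). $\mathcal W_{\delta_i}=(-\infty,d_i^* )$ with $d_i^*=d/(\delta_i+c)$, $\delta_i\ge0$, $c>0$ a constant. $g_0>0$ is a nominal estimate of $g$, $\epsilon\in(0,1)$, and $\sigma_{k,0}$ denotes $\sigma_k$ evaluated at $g=g_0$. $\mathrm{erf}(x)=\frac2{\sqrt\pi}\int_0^xe^{-t^2}dt$. *)

(* Defs.v *)
From HB Require Import structures.
From mathcomp Require Import all_boot all_order all_algebra.
From mathcomp Require Import all_classical all_reals all_analysis.
Set Implicit Arguments. Unset Strict Implicit. Unset Printing Implicit Defensive.
Import Order.TTheory GRing.Theory Num.Theory.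
Local Open Scope classical_set_scope.
Local Open Scope ring_scope.

Section Defs.
Variable R : realType.

Definition erf (x : R) : R :=
  2 / Num.sqrt pi *
  (if 0 <= x then Rintegral lebesgue_measure `[0, x] (fun t => expR (- t ^+ 2))
   else - Rintegral lebesgue_measure `[x, 0] (fun t => expR (- t ^+ 2))).

Definition fdelay (s1 s2 : R) : R :=
  Rintegral lebesgue_measure setT
    (fun r => ((s1 * s2 - r ^+ 2 * cos r) ^+ 2 + r ^+ 2 * (s1 - r * sin r) ^+ 2)^-1).

Definition stab_region (s1 s2 : R) : Prop :=
  0 < s1 < pi / 2 /\
  exists a : R, [/\ 0 < a < pi / 2, a * sin a = s1 & 0 < s2 < a / tan a].

Definition laplacian n (W : 'M[R]_n) : 'M[R]_n :=
  \matrix_(a, b) ((a == b)%:R * (\sum_k W a k) - W a b).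

Definition conn_pos_weighted_graph n (W : 'M[R]_n) : Prop :=
  [/\ W^T = W, (forall a b, 0 <= W a b), (forall a, W a a = 0)
    & forall a b, connect [rel x y | 0 < W x y] a b].

(* column vector \tilde e_k = e_{k+1} - e_k  (0-based: k in 'I_(n-1)) *)
Definition etilde n (k : 'I_n.-1) : 'cV[R]_n :=
  \col_l ((if (l : nat) == k.+1 then 1 else 0) - (if (l : nat) == k then 1 else 0)).

Definition dotv n (u v : 'cV[R]_n) : R := \sum_l u l 0 * v l 0.

Definition sigma_kl n (lam : 'I_n -> R) (q : 'I_n -> 'cV[R]_n) (beta tau g : R)
  (k l : 'I_n.-1) : R :=
  g ^+ 2 * tau ^+ 3 / (2 * pi) *
  \sum_(m < n) dotv (etilde k) (q m) * dotv (etilde l) (q m) * fdelay (lam m * tau) (beta * tau).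

Definition sigma_k n lam q beta tau g (k : 'I_n.-1) : R :=
  Num.sqrt (sigma_kl lam q beta tau g k k).

Definition rho_kl n lam q beta tau g (k l : 'I_n.-1) : R :=
  sigma_kl lam q beta tau g k l / (sigma_k lam q beta tau g l * sigma_k lam q beta tau g k).

(* E[ \bar d_j | \bar d_i \in W_{delta_i} ] as given by the closed formula *)
Definition condE n lam q beta tau (d dstar g : R) (i j : 'I_n.-1) : R :=
  d - Num.sqrt (2 / pi) *
      (rho_kl lam q beta tau g j i * sigma_k lam q beta tau g j *
       expR (- (dstar - d) ^+ 2 / (2 * sigma_k lam q beta tau g i ^+ 2))) /
      (1 + erf ((dstar - d) / (Num.sqrt 2 * sigma_k lam q beta tau g i))).

(* h(e) with sigma_{k,0} = sigma_k at g = g0 *)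
Definition hfun n lam q beta tau (d dstar g0 : R) (i j : 'I_n.-1) (e : R) : R :=
  d - Num.sqrt (2 / pi) *
      (rho_kl lam q beta tau g0 j i * sigma_k lam q beta tau g0 j * Num.sqrt (1 + e) *
       expR (- (dstar - d) ^+ 2 / (2 * sigma_k lam q beta tau g0 i ^+ 2 * (1 + e)))) /
      (1 + erf ((dstar - d) / (Num.sqrt (2 * (1 + e)) * sigma_k lam q beta tau g0 i))).

Definition Mg (g0 eps : R) : set R :=
  [set g | 0 < g /\ (1 - eps) * g0 ^+ 2 <= g ^+ 2 <= (1 + eps) * g0 ^+ 2].

Definition DRrisk n lam q beta tau (d dstar g0 eps : R) (i j : 'I_n.-1) : R :=
  d / inf [set condE lam q beta tau d dstar g i j | g in Mg g0 eps] - 1.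

End Defs.

(* Main.v *)
Set Warnings "-all".
Require Import Defs.
From HB Require Import structures.
From mathcomp Require Import all_boot all_order all_algebra.
From mathcomp Require Import all_classical all_reals all_analysis.
From mathcomp Require Import measurable_realfun.
From mathcomp Require Import ring lra.
Import Order.TTheory GRing.Theory Num.Theory.
Import numFieldNormedType.Exports.
Local Open Scope classical_set_scope.
Local Open Scope ring_scope.

Section Aux.
Context {R : realType}.
Let mu := @lebesgue_measure R.

Lemma mEF (f : R -> R) (D : set R) : measurable D -> continuous f ->
  measurable_fun D (fun x => (f x)%:E).
Proof.
move=> mD cf; apply/measurable_EFinP; apply: measurable_funTS.
exact: continuous_measurable_fun.
Qed.

Lemma int_Ny0_gauss :
  (\int[mu]_(x in `]-oo, 0%R]) (gauss_fun x)%:E = (Num.sqrt pi / 2)%:E)%E.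
Proof.
have := @ge0_integration_by_substitutionNy R gauss_fun 0.
rewrite oppr0 => ->.
- rewrite -integral0y_gauss; apply: eq_integral => x _.
  by rewrite /= /gauss_fun sqrrN.
- by apply: continuous_subspaceT; exact: continuous_gauss_fun.
- by move=> x _; exact: gauss_fun_ge0.
Qed.

Lemma int_cpt_fin (f : R -> R) a b : continuous f ->
  (\int[mu]_(x in `[a, b]) (f x)%:E)%E = (\int[mu]_(x in `[a, b]) f x)%:E.
Proof.
move=> cf; rewrite /Rintegral fineK//.
apply: integrable_fin_num => //.
apply: continuous_compact_integrable; first exact: segment_compact.
exact: continuous_subspaceT.
Qed.


Lemma mG (D : set R) : measurable D -> measurable_fun D (fun t => (gauss_fun t)%:E).
Proof. by move=> mD; apply: mEF => //; exact: continuous_gauss_fun. Qed.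

Lemma int_Ny_gauss x :
  (\int[mu]_(t in `]-oo, x]) (gauss_fun t)%:E)%E = (Num.sqrt pi / 2 * (1 + erf x))%:E.
Proof.
have sp : 0 < Num.sqrt (pi : R) by rewrite sqrtr_gt0 pi_gt0.
rewrite /erf; case: ifPn => x0.
- rewrite (@itv_bndbnd_setU _ _ -oo%O (BRight 0) (BRight x)) //.
  rewrite ge0_integral_setU //. all: try (by move=> t _; rewrite lee_fin gauss_fun_ge0). 2: by apply: mG; apply: measurableU.
  2: { rewrite disj_set2E; apply/eqP; rewrite -subset0 => t [] /=; rewrite !in_itv /= => t0 /andP[t1 t2].
    by move: (lt_le_trans t1 t0); rewrite ltxx. }
  rewrite int_Ny0_gauss integral_itv_obnd_cbnd; last exact: mG.
  rewrite int_cpt_fin; last exact: continuous_gauss_fun.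
  rewrite -EFinD; congr EFin; rewrite /gauss_fun.
  by field; rewrite gt_eqF.
- rewrite -ltNge in x0.
  have := int_Ny0_gauss.
  rewrite (@itv_bndbnd_setU _ _ -oo%O (BRight x) (BRight 0)) //; last by rewrite bnd_simp ltW.
  rewrite ge0_integral_setU //.
  2: by apply: mG; apply: measurableU.
  2: by move=> t _; rewrite lee_fin gauss_fun_ge0.
  2: { rewrite disj_set2E; apply/eqP; rewrite -subset0 => t [] /=; rewrite !in_itv /= => t0 /andP[t1 t2].
    by move: (lt_le_trans t1 t0); rewrite ltxx. }
  rewrite integral_itv_obnd_cbnd; last exact: mG.
  rewrite int_cpt_fin; last exact: continuous_gauss_fun.
  have : (0 <= \int[mu]_(t in `]-oo, x]) (gauss_fun t)%:E)%E.
    by apply: integral_ge0 => t _; rewrite lee_fin gauss_fun_ge0.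
  rewrite /mu.
  case: (\int[lebesgue_measure]_(t in `]-oo, x]) (gauss_fun t)%:E)%E => [r||] //= _.
  move=> /eqP; rewrite -EFinD eqe => /eqP H.
  congr EFin; rewrite /gauss_fun in H *.
  apply: (@addIr _ (\int[lebesgue_measure]_(t in `[x, 0]) expR (- t ^+ 2))).
  rewrite H; by field; rewrite gt_eqF.
Qed.


Lemma dF (g c : R) : derive1 (fun v : R => g * v + c) = cst g.
Proof.
apply/funext => v; rewrite derive.derive1E.
by rewrite derive_val addr0 /= -[RHS]mulr1.
Qed.

Lemma cont_f (g K : R) : continuous (fun v : R => expR (- g ^+ 2 * v ^+ 2 - 2 * K * v)).
Proof.
move=> x; apply: continuous_comp; last exact: continuous_expR.
apply: cvgB; apply: cvgM.
- exact: cvg_cst.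
- exact: exprn_continuous.
- exact: cvg_cst.
- exact: cvg_id.
Qed.

Lemma int_sub (g K : R) : 0 < g ->
  (\int[mu]_(t in `]-oo, (K / g)%R]) (gauss_fun t)%:E)%E =
  ((g * expR (- (K / g) ^+ 2))%:E *
   \int[mu]_(v in `]-oo, 0%R]) (expR (- g ^+ 2 * v ^+ 2 - 2 * K * v))%:E)%E.
Proof.
move=> g0.
have := @increasing_ge0_integration_by_substitutionNy R (fun v => g * v + K / g) gauss_fun 0.
rewrite mulr0 add0r dF => ->.
- rewrite -ge0_integralZl //.
  + apply: eq_integral => v _; congr EFin; rewrite /= /gauss_fun.
    rewrite !fctE /= [LHS]mulrC -(mulrA g) -expRD; congr (_ * expR _).
    by field; rewrite gt_eqF.
  all: first [ by apply: mEF => //; exact: cont_f | by move=> v _; rewrite lee_fin expR_ge0 | by rewrite lee_fin mulr_ge0 ?expR_ge0 ?ltW | idtac ].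
- by move=> x y _ _ xy; rewrite ltrD2r ltr_pM2l.
- by move=> x _; exact: cst_continuous.
- exact: is_cvg_cst.
- exact: cvg_cst.
- split.
  + by move=> x _; exact: ex_derive.
  + apply: cvg_at_left_filter; apply: cvgD; last exact: cvg_cst.
    by apply: cvgM; [exact: cvg_cst | exact: cvg_id].
- apply: (cvg_comp (fun x => g * x) (fun r => r + K / g)).
  + exact: gt0_cvgMrNy g0 cvg_id.
  + exact: cvg_addrr_Ny.
- by apply: continuous_subspaceT; exact: continuous_gauss_fun.
- by move=> x _; exact: gauss_fun_ge0.
Qed.

Lemma int_lb (f : R -> R) : continuous f -> (forall x, 0 <= f x) ->
  (forall x, x < 0 -> 0 < f x) ->
  exists2 c, 0 < c & (c%:E <= \int[mu]_(x in `]-oo, 0%R]) (f x)%:E)%E.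
Proof.
move=> cf f0 fp.
have [x0 x0in minf] : exists2 c : R, c \in `[-2, -1] & forall t : R, t \in `[-2, -1] -> f c <= f t.
  apply: EVT_min; first by rewrite lerN2 ler1n.
  exact: continuous_subspaceT.
have x0n : x0 < 0.
  by move: x0in; rewrite in_itv /= => /andP[_ h]; apply: le_lt_trans h _; rewrite oppr_lt0.
exists (f x0); first exact: fp.
apply: (@le_trans _ _ (\int[mu]_(x in `[(-2)%R, (-1)%R]) (f x)%:E)%E); last first.
  apply: ge0_subset_integral => //.
  - exact: mEF.
  - by move=> x _; rewrite lee_fin.
  - move=> x /=; rewrite !in_itv /= => /andP[_ h]; apply: le_trans h _.
    by rewrite oppr_le0.
apply: (@le_trans _ _ (\int[mu]_(x in `[(-2)%R, (-1)%R]) (cst (f x0)%:E x))%E).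
  rewrite integral_cst //.
  change ((f x0)%:E <= (f x0)%:E * lebesgue_measure (`[(-2)%R, (-1)%R] : set R))%E.
  have -> : (lebesgue_measure (`[(-2)%R, (-1)%R] : set R) = 1%E).
    rewrite lebesgue_measure_itv /= lte_fin ltrN2 ltr1n /= -EFinD; congr EFin.
    by rewrite opprK addrC [2%R]/(1 + 1)%R addrK.
  by rewrite mule1.
apply: ge0_le_integral => //.
- by move=> x xin; rewrite lee_fin.
- exact: mEF.
Qed.

Definition fK (g K : R) := fun v : R => expR (- g ^+ 2 * v ^+ 2 - 2 * K * v).

Lemma key_fin (g K : R) : 0 < g -> exists r : R,
  (\int[mu]_(v in `]-oo, 0%R]) (fK g K v)%:E)%E = r%:E /\
  Num.sqrt pi / 2 * (1 + erf (K / g)) = g * expR (- (K / g) ^+ 2) * r.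
Proof.
move=> g0.
have := int_Ny_gauss (K / g); rewrite int_sub //.
have : (0 <= \int[mu]_(v in `]-oo, 0%R]) (fK g K v)%:E)%E.
  by apply: integral_ge0 => t _; rewrite lee_fin expR_ge0.
rewrite /fK.
case: (\int[mu]_(v in `]-oo, 0%R]) (expR (- g ^+ 2 * v ^+ 2 - 2 * K * v))%:E)%E => [r||] //= _.
- by move=> /eqP; rewrite -EFinM eqe => /eqP H; exists r.
- by rewrite gt0_muley // lte_fin mulr_gt0 ?expR_gt0.
Qed.

Lemma key_dec (g1 g2 K : R) : 0 < g1 -> g1 < g2 ->
  exists r1 r2 : R, [/\
  (\int[mu]_(v in `]-oo, 0%R]) (fK g1 K v)%:E)%E = r1%:E,
  (\int[mu]_(v in `]-oo, 0%R]) (fK g2 K v)%:E)%E = r2%:E,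
  0 < r2 & r2 < r1].
Proof.
move=> g10 g12.
have g20 : 0 < g2 by apply: lt_trans g12.
have [r1 [H1 _]] := key_fin g1 K g10.
have [r2 [H2 _]] := key_fin g2 K g20.
exists r1, r2; split => //.
- have [c c0 hc] := @int_lb (fK g2 K) (cont_f g2 K) (fun x => expR_ge0 _) (fun x _ => expR_gt0 _).
  by move: hc; rewrite H2 lee_fin => h; apply: lt_le_trans h.
- have hle : forall v, fK g2 K v <= fK g1 K v.
    move=> v; rewrite /fK ler_expR lerD2r ler_wpM2r ?sqr_ge0 // lerN2.
    by rewrite ler_sqr ?nnegrE ltW //; apply: lt_trans g12.
  have cD : continuous (fun v => fK g1 K v - fK g2 K v).
    by move=> x; apply: continuousB; [exact: cont_f | exact: cont_f].
  have D0 : forall x, 0 <= fK g1 K x - fK g2 K x by move=> x; rewrite subr_ge0.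
  have Dp : forall x, x < 0 -> 0 < fK g1 K x - fK g2 K x.
    move=> x x0; have x2 : 0 < x ^+ 2 by rewrite expr2 nmulr_lgt0.
    rewrite subr_gt0 /fK ltr_expR ltrD2r ltr_pM2r //.
    by rewrite ltrN2 -subr_gt0 subr_sqr mulr_gt0 // ?subr_gt0 // addr_gt0 // (lt_trans g10).
  have [c c0 hc] := @int_lb _ cD D0 Dp.
  have : (\int[mu]_(v in `]-oo, 0%R]) (fK g1 K v)%:E)%E =
         (\int[mu]_(v in `]-oo, 0%R]) (fK g2 K v)%:E +
          \int[mu]_(v in `]-oo, 0%R]) (fK g1 K v - fK g2 K v)%:E)%E.
    rewrite -ge0_integralD //.
    1: apply: eq_integral => v _.
    1: by rewrite -EFinD addrC subrK.
    1: by move=> v _; rewrite lee_fin expR_ge0.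
    1: by apply: mEF => //; exact: cont_f.
    1: by move=> v _; rewrite lee_fin subr_ge0.
    1: by apply: mEF.
  rewrite H1 H2; move: hc.
  case: (\int[mu]_(v in `]-oo, 0%R]) (fK g1 K v - fK g2 K v)%:E)%E => [r||] //=.
  rewrite lee_fin => cr /eqP; rewrite -EFinD eqe => /eqP ->.
  by rewrite ltrDl; apply: lt_le_trans cr.
Qed.

Definition Pf (a s g : R) := g * expR (- a ^+ 2 / (2 * (g * s) ^+ 2)) /
  (1 + erf (a / (Num.sqrt 2 * (g * s)))).

Lemma Pf_eq (a s g r : R) : 0 < s -> 0 < g -> 0 < r ->
  (\int[mu]_(v in `]-oo, 0%R]) (fK g (a / (Num.sqrt 2 * s)) v)%:E)%E = r%:E ->
  Pf a s g = Num.sqrt pi / 2 / r.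
Proof.
move=> s0 g0 r0 Hr.
set K := a / (Num.sqrt 2 * s).
have s2 : 0 < Num.sqrt (2 : R) by rewrite sqrtr_gt0.
have h1 : a / (Num.sqrt 2 * (g * s)) = K / g.
  by rewrite /K; field; rewrite !gt_eqF.
have h2 : a ^+ 2 / (2 * (g * s) ^+ 2) = (K / g) ^+ 2.
  by rewrite -h1 expr_div_n !exprMn sqr_sqrtr // ler0n.
have [r' [Hr' E]] := key_fin g K g0.
move: Hr'; rewrite Hr => /eqP; rewrite eqe => /eqP Hrr; subst r'.
rewrite /Pf h1 mulNr h2.
have sp : 0 < Num.sqrt (pi : R) by rewrite sqrtr_gt0 pi_gt0.
have -> : 1 + erf (K / g) = 2 / Num.sqrt pi * (g * expR (- (K / g) ^+ 2) * r).
  by rewrite -E; field; rewrite gt_eqF.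
by field; rewrite !gt_eqF ?expR_gt0.
Qed.

Lemma Pf_incr (a s g1 g2 : R) : 0 < s -> 0 < g1 -> g1 < g2 -> Pf a s g1 < Pf a s g2.
Proof.
move=> s0 g10 g12.
have g20 : 0 < g2 by apply: lt_trans g12.
have [r1 [r2 [H1 H2 r20 r21]]] := key_dec g1 g2 (a / (Num.sqrt 2 * s)) g10 g12.
have r10 : 0 < r1 by apply: lt_trans r21.
rewrite (@Pf_eq a s g1 r1 s0 g10 r10 H1) (@Pf_eq a s g2 r2 s0 g20 r20 H2).
rewrite ltr_pM2l ?ltf_pV2 // ?divr_gt0 // ?sqrtr_gt0 ?pi_gt0 //.
Qed.
End Aux.

Theorem theorem2 (R : realType) (n : nat) (W : 'M[R]_n)
  (lam : 'I_n -> R) (q : 'I_n -> 'cV[R]_n)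
  (beta tau d delta_i c g0 eps : R) (i j : 'I_n.-1) :
  (3 <= n)%N ->
  conn_pos_weighted_graph W ->
  (forall m, laplacian W *m q m = lam m *: q m) ->
  (forall a b, (q a)^T *m q b = ((a == b)%:R)%:M) ->
  (forall a b : 'I_n, (a <= b)%N -> lam a <= lam b) ->
  (forall m : 'I_n, (m : nat) = 0%N ->
     lam m = 0 /\ q m = (Num.sqrt (n%:R))^-1 *: const_mx 1) ->
  (forall m : 'I_n, (m : nat) = 1%N -> 0 < lam m) ->
  0 < d -> 0 < beta -> 0 < tau ->
  (forall m : 'I_n, (1 <= m)%N -> stab_region (lam m * tau) (beta * tau)) ->
  0 <= delta_i -> 0 < c -> 0 < g0 -> 0 < eps < 1 ->
  i != j ->
  let dstar := d / (delta_i + c) in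
  let E := fun g => condE lam q beta tau d dstar g i j in
  let rho := rho_kl lam q beta tau g0 j i in
  let h := hfun lam q beta tau d dstar g0 i j in
  ((rho < 0 -> forall g1 g2, 0 < g1 -> g1 < g2 -> E g1 < E g2) /\
   (0 < rho -> forall g1 g2, 0 < g1 -> g1 < g2 -> E g2 < E g1)) /\
  (rho < 0 -> DRrisk lam q beta tau d dstar g0 eps i j = d / h (- eps) - 1) /\
  (0 < rho -> DRrisk lam q beta tau d dstar g0 eps i j = d / h eps - 1) /\
  (rho = 0 -> DRrisk lam q beta tau d dstar g0 eps i j = 0).

Proof.
move=> n3 Wc Lq qo lmono l0 l1 d0 b0 t0 stab dl0 c0 g00 /andP[e0 e1] ij dstar E rho h.
pose a := dstar - d.
pose si := sigma_k lam q beta tau 1 i.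
pose sj := sigma_k lam q beta tau 1 j.
pose r1 := rho_kl lam q beta tau 1 j i.
have sigE : forall g k l, sigma_kl lam q beta tau g k l = g ^+ 2 * sigma_kl lam q beta tau 1 k l.
  by move=> g k l; rewrite /sigma_kl expr1n mul1r !mulrA.
have skE : forall g k, 0 < g -> sigma_k lam q beta tau g k = g * sigma_k lam q beta tau 1 k.
  move=> g k gp; rewrite /sigma_k sigE sqrtrM ?sqr_ge0 // sqrtr_sqr gtr0_norm //.
have rhoE : forall g, 0 < g -> rho_kl lam q beta tau g j i = r1.
  move=> g gp; rewrite /r1 /rho_kl sigE (skE g i gp) (skE g j gp).
  move: (sigma_kl lam q beta tau 1 j i) (sigma_k lam q beta tau 1 i) (sigma_k lam q beta tau 1 j) => C x y.
  have -> : g * x * (g * y) = g ^+ 2 * (x * y) by ring.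
  by rewrite invfM mulrACA divff ?mul1r // expf_neq0 // gt_eqF.
have EE : forall g, 0 < g -> E g = d - Num.sqrt (2 / pi) * r1 * sj * Pf a si g.
  move=> g gp; rewrite /E /condE (rhoE g gp) (skE g i gp) (skE g j gp) /Pf -/a -/si -/sj.
  by ring.
have hE : forall e, -1 < e -> h e = E (g0 * Num.sqrt (1 + e)).
  move=> e he; have e1p : 0 < 1 + e by lra.
  have gp : 0 < g0 * Num.sqrt (1 + e) by rewrite mulr_gt0 // sqrtr_gt0.
  rewrite /h /hfun /E /condE (rhoE g0 g00) (rhoE _ gp) (skE g0 i g00) (skE g0 j g00).
  rewrite (skE _ i gp) (skE _ j gp) -/a -/si -/sj.
  have q1 : Num.sqrt (2 * (1 + e)) * (g0 * si) = Num.sqrt 2 * (g0 * Num.sqrt (1 + e) * si).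
    rewrite sqrtrM; [ring | by rewrite ler0n].
  have q2 : 2 * (g0 * si) ^+ 2 * (1 + e) = 2 * (g0 * Num.sqrt (1 + e) * si) ^+ 2.
    by rewrite !exprMn (sqr_sqrtr (ltW e1p)); ring.
  by rewrite q1 q2; ring.
have rhoD : rho = r1 by rewrite /rho rhoE.
have pos : r1 != 0 -> 0 < si /\ 0 < sj.
  move=> r0; split; rewrite lt0r sqrtr_ge0 andbT; apply/eqP => s0; move: r0;
    rewrite /r1 /rho_kl -/si -/sj s0 ?(mul0r, mulr0) invr0 mulr0 eqxx //.
have cpos : 0 < Num.sqrt (2 / pi : R) by rewrite sqrtr_gt0 divr_gt0 // pi_gt0.
have incr : r1 < 0 -> forall g1 g2, 0 < g1 -> g1 < g2 -> E g1 < E g2.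
  move=> rn g1 g2 g10 g12; have [si0 sj0] := pos (ltr0_neq0 rn).
  have g20 : 0 < g2 by apply: lt_trans g12.
  rewrite (EE g1 g10) (EE g2 g20) ltrD2l ltrN2 ltr_nM2l; first exact: Pf_incr.
  by rewrite pmulr_llt0 // pmulr_rlt0.
have decr : 0 < r1 -> forall g1 g2, 0 < g1 -> g1 < g2 -> E g2 < E g1.
  move=> rp g1 g2 g10 g12; have [si0 sj0] := pos (lt0r_neq0 rp).
  have g20 : 0 < g2 by apply: lt_trans g12.
  rewrite (EE g1 g10) (EE g2 g20) ltrD2l ltrN2 ltr_pM2l; first exact: Pf_incr.
  by apply: mulr_gt0 => //; apply: mulr_gt0.
pose gl := g0 * Num.sqrt (1 - eps).
pose gu := g0 * Num.sqrt (1 + eps).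
have glp : 0 < gl by apply: mulr_gt0 => //; rewrite sqrtr_gt0 subr_gt0.
have gup : 0 < gu by apply: mulr_gt0 => //; rewrite sqrtr_gt0 addr_gt0.
have gl2 : gl ^+ 2 = (1 - eps) * g0 ^+ 2.
  by rewrite /gl exprMn (sqr_sqrtr (_ : 0 <= 1 - eps)) ?subr_ge0 ?(ltW e1) // mulrC.
have gu2 : gu ^+ 2 = (1 + eps) * g0 ^+ 2.
  by rewrite /gu exprMn (sqr_sqrtr (_ : 0 <= 1 + eps)) ?addr_ge0 ?(ltW e0) // mulrC.
have inMl : Mg g0 eps gl.
  rewrite /Mg /=; split => //; rewrite gl2 lexx /= ler_pM2r ?exprn_gt0 // lerD2l; apply: (@le_trans _ _ 0); [rewrite oppr_le0|]; exact: ltW.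
have inMu : Mg g0 eps gu.
  rewrite /Mg /=; split => //; rewrite gu2 lexx andbT ler_pM2r ?exprn_gt0 // lerD2l; apply: (@le_trans _ _ 0); [rewrite oppr_le0|]; exact: ltW.
have Mb : forall g, Mg g0 eps g -> gl <= g /\ g <= gu.
  move=> g [gp /andP[h1 h2]]; split.
  - by rewrite -(@ler_pXn2r _ 2) // ?nnegrE ?(ltW glp) ?(ltW gp) // gl2.
  - by rewrite -(@ler_pXn2r _ 2) // ?nnegrE ?(ltW gup) ?(ltW gp) // gu2.
have infE : forall m, Mg g0 eps m -> (forall g, Mg g0 eps g -> E m <= E g) ->
    inf [set condE lam q beta tau d dstar g i j | g in Mg g0 eps] = E m.
  move=> m mM mmin; apply/eqP; rewrite eq_le; apply/andP; split.
  - have hl : has_lbound [set condE lam q beta tau d dstar g i j | g in Mg g0 eps].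
      by exists (E m) => y [g gM <-]; exact: mmin.
    by apply: (ge_inf hl); exists m.
  - apply: lb_le_inf; first by exists (E m); exists m.
    by move=> y [g gM <-]; exact: mmin.
split; first by split; rewrite rhoD; [exact: incr | exact: decr].
split.
  move=> rn; rewrite rhoD in rn.
  rewrite /DRrisk (infE gl inMl); first by rewrite (hE (- eps)) //; lra.
  move=> g gM; have [lg _] := Mb g gM.
  by move: lg; rewrite le_eqVlt => /orP[/eqP <- // | lt]; apply/ltW/incr.
split.
  move=> rp; rewrite rhoD in rp.
  rewrite /DRrisk (infE gu inMu); first by rewrite (hE eps) //; lra.
  move=> g gM; have [_ ug] := Mb g gM.
  by move: ug; rewrite le_eqVlt => /orP[/eqP -> // | lt]; apply/ltW/decr => //; case: gM.
move=> r0; rewrite rhoD in r0.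
have Ed : forall g, 0 < g -> E g = d by move=> g gp; rewrite EE // r0 mulr0 mul0r mul0r subr0.
rewrite /DRrisk (infE gl inMl).
  by rewrite Ed // divff ?subrr // gt_eqF.
by move=> g [gp _]; rewrite !Ed.
Qed.
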